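(* Let $0\le a\le b\le1$ and $T=\begin{pmatrix}a&1-b\\1-a&b\end{pmatrix}$. Let $\boldsymbol{\mu}=\frac12\big(1+a+(1-b),\,b-a,\,0,\,0\big)$. Then for every qubit channel $\Phi$ with classical action $T$ one has $\boldsymbol{\mu}\succ\boldsymbol{\lambda}(J_\Phi)$, and there exists a qubit channel $\Phi^{\mathcal C}$ with classical action $T$ such that $\boldsymbol{\lambda}(J_{\Phi^{\mathcal C}})=\boldsymbol{\mu}$.
   Context: Qubit channels are completely positive trace-preserving maps on $2\times2$ complex matrices. Fix an orthonormal basis $\{|1\rangle,|2\rangle\}$, $|\Omega\rangle=\sum_i|ii\rangle$. The Jamio{\l}kowski state of $\Phi$ is $J_\Phi=\frac12(\Phi\otimes\mathcal{I})(|\Omega\rangle\langle\Omega|)$, and the classical action of $\Phi$ is the matrix $T$ with $T_{ij}=\langle i|\Phi(|j\rangle\langle j|)|i\rangle$. $\boldsymbol{\lambda}(X)$ denotes eigenvalues of a Hermitian $X$ in non-increasing order. For real vectors $x,y$ of equal length $n$, $x\succ y$ means $\sum_{i=1}^kx_i^\downarrow\ge\sum_{i=1}^ky_i^\downarrow$ for all $k$, with $x^\downarrow$ the non-increasing rearrangement. *)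

(* Defs.v *)
From HB Require Import structures.
From mathcomp Require Import all_boot all_order all_algebra.
From mathcomp Require Import complex mxtens.
Set Implicit Arguments. Unset Strict Implicit. Unset Printing Implicit Defensive.
Import Order.TTheory GRing.Theory Num.Theory.
Local Open Scope ring_scope.

Section QubitDefs.
Variable R : rcfType.
Local Notation C := (R[i]).

Definition adjmx m n (A : 'M[C]_(m, n)) : 'M[C]_(n, m) := (map_mx Num.conj A)^T.

Definition psd n (A : 'M[C]_n) : Prop :=
  adjmx A = A /\ forall v : 'cV[C]_n, 0 <= (adjmx v *m A *m v) 0 0.

(* (Phi (x) I_k)(X) for X acting on C^2 (x) C^k, with index (i,p) encoded by
   mxtens_index (the convention of the tensor product [tensmx] / [*t]). *)
Definition ampl (Phi : 'M[C]_2 -> 'M[C]_2) (k : nat) (X : 'M[C]_(2 * k)) :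
    'M[C]_(2 * k) :=
  \matrix_(r, c)
    Phi (\matrix_(i < 2, j < 2)
           X (mxtens_index (i, (mxtens_unindex r).2))
             (mxtens_index (j, (mxtens_unindex c).2)))
        (mxtens_unindex r).1 (mxtens_unindex c).1.

Definition completely_positive (Phi : 'M[C]_2 -> 'M[C]_2) : Prop :=
  forall (k : nat) (X : 'M[C]_(2 * k)), psd X -> psd (ampl Phi X).

Definition trace_preserving (Phi : 'M[C]_2 -> 'M[C]_2) : Prop :=
  forall X : 'M[C]_2, \tr (Phi X) = \tr X.

Definition qubit_channel (Phi : {linear 'M[C]_2 -> 'M[C]_2}) : Prop :=
  completely_positive Phi /\ trace_preserving Phi.

(* Jamiolkowski state J = 1/2 (Phi (x) I)(|Omega><Omega|)
   = 1/2 sum_{i,j} Phi(|i><j|) (x) |i><j| *)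
Definition jamiolkowski (Phi : 'M[C]_2 -> 'M[C]_2) : 'M[C]_(2 * 2) :=
  2^-1 *: \sum_(i < 2) \sum_(j < 2) (Phi (delta_mx i j) *t delta_mx i j).

Definition classical_action (Phi : 'M[C]_2 -> 'M[C]_2) : 'M[C]_2 :=
  \matrix_(i, j) Phi (delta_mx j j) i i.

Definition Tab (a b : R) : 'M[C]_2 :=
  \matrix_(i < 2, j < 2)
    real_complex R (nth 0 (nth [::] [:: [:: a; 1 - b]; [:: 1 - a; b]] i) j).

Definition spectrum n (X : 'M[C]_n) (s : seq R) : Prop :=
  size s = n /\ char_poly X = \prod_(x <- s) ('X - (real_complex R x)%:P).

Definition majorizes (x y : seq R) : Prop :=
  size x = size y /\
  forall k : nat, (k <= size x)%N ->
    \sum_(i < k) (sort (fun u v : R => v <= u) y)`_i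
      <= \sum_(i < k) (sort (fun u v : R => v <= u) x)`_i.

Definition mu_vec (a b : R) : seq R :=
  [:: (1 + a + (1 - b)) / 2; (b - a) / 2; 0; 0].

End QubitDefs.

(* Main.v *)
Require Import Defs.
From HB Require Import structures.
From mathcomp Require Import all_boot all_order all_algebra.
From mathcomp Require Import complex mxtens.
From mathcomp Require Import ring lra.
Import Order.TTheory GRing.Theory Num.Theory.
Local Open Scope ring_scope.
Set Implicit Arguments. Unset Strict Implicit.

Definition o0 : 'I_2 := @Ordinal 2 0 isT.
Definition o1 : 'I_2 := @Ordinal 2 1 isT.

Lemma ord2P (i : 'I_2) : i = o0 \/ i = o1.
Proof. case: i => [[|[|//]] Hi]; [left|right]; exact: val_inj. Qed.

Lemma big2 (T : Type) (idx : T) (op : Monoid.com_law idx) (F : 'I_2 -> T) :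
  \big[op/idx]_(i < 2) F i = op (F o0) (F o1).
Proof.
rewrite big_ord_recl big_ord1 /=; congr (op (F _) (F _)); exact: val_inj.
Qed.

Lemma big_tens (T : Type) (idx : T) (op : Monoid.com_law idx) m n (F : 'I_(m * n) -> T) :
  \big[op/idx]_(r < m * n) F r = \big[op/idx]_(i < m) \big[op/idx]_(j < n) F (mxtens_index (i, j)).
Proof.
rewrite pair_big; apply: reindex => /=.
exists (@mxtens_unindex m n) => [[i j] _|k _]; first by rewrite /= mxtens_indexK. by rewrite -surjective_pairing mxtens_unindexK.
Qed.


Section Main.
Variable R : rcfType.
Local Notation C := (R[i]).

Lemma adjmxK m n (A : 'M[C]_(m,n)) : adjmx (adjmx A) = A.
Proof. by apply/matrixP=> i j; rewrite !mxE conjCK. Qed.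
Lemma adjmx_mul m n p (A : 'M[C]_(m,n)) (B : 'M[C]_(n,p)) :
  adjmx (A *m B) = adjmx B *m adjmx A.
Proof. by rewrite /adjmx map_mxM trmx_mul. Qed.
Lemma adjmxD m n (A B : 'M[C]_(m,n)) : adjmx (A + B) = adjmx A + adjmx B.
Proof. by rewrite /adjmx map_mxD linearD. Qed.
Lemma adjmxZ m n c (A : 'M[C]_(m,n)) : adjmx (c *: A) = (Num.conj c) *: adjmx A.
Proof. by apply/matrixP=> i j; rewrite !mxE rmorphM. Qed.

Definition qf n (A : 'M[C]_n) (v : 'cV[C]_n) := (adjmx v *m A *m v) 0 0.

Lemma qfE n (A : 'M[C]_n) v :
  qf A v = \sum_i \sum_j Num.conj (v i 0) * A i j * v j 0.
Proof.
rewrite /qf !mxE exchange_big; apply: eq_bigr => j _; rewrite !mxE big_distrl /=.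
by apply: eq_bigr => i _; rewrite !mxE.
Qed.

Lemma psd_add n (A B : 'M[C]_n) : psd A -> psd B -> psd (A + B).
Proof.
move=> [hA pA] [hB pB]; split; first by rewrite adjmxD hA hB.
by move=> v; rewrite mulmxDr mulmxDl mxE addr_ge0.
Qed.

Lemma psd_conj n m (X : 'M[C]_m) (A : 'M[C]_(n, m)) : psd X -> psd (A *m X *m adjmx A).
Proof.
move=> [hX pX]; split; first by rewrite !adjmx_mul adjmxK hX mulmxA.
move=> v; have := pX (adjmx A *m v).
by rewrite adjmx_mul adjmxK !mulmxA.
Qed.

Lemma psd_scale n (c : C) (X : 'M[C]_n) : 0 <= c -> psd X -> psd (c *: X).
Proof.
move=> c0 [hX pX]; have cr : Num.conj c = c by apply/CrealP; exact: ger0_real.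
split; first by rewrite adjmxZ cr hX.
by move=> v; rewrite -scalemxAr -scalemxAl mxE mulr_ge0.
Qed.


Lemma jamE (Phi : 'M[C]_2 -> 'M[C]_2) i p j q :
  jamiolkowski Phi (mxtens_index (i, p)) (mxtens_index (j, q)) = 2^-1 * Phi (delta_mx p q) i j.
Proof.
rewrite /jamiolkowski mxE summxE big2 !summxE !big2 !tensmxE !mxE.
by case: (ord2P p) => ->; case: (ord2P q) => -> /=; rewrite ?mulr0 ?mulr1 ?addr0 ?add0r.
Qed.


Definition Qw (m : 'I_2 -> 'I_2 -> 'I_2 -> 'I_2 -> C) (w : 'I_2 -> 'I_2 -> C) :=
  \sum_i \sum_p \sum_j \sum_q Num.conj (w i p) * m p q i j * w j q.
Definition Nw (w : 'I_2 -> 'I_2 -> C) := \sum_i \sum_p Num.conj (w i p) * w i p.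
Definition w4 (x0 x1 y0 y1 : C) : 'I_2 -> 'I_2 -> C := fun i p =>
  if i == o0 then (if p == o0 then x0 else x1) else (if p == o0 then y0 else y1).

Lemma conj_ge0_id (k : C) : 0 <= k -> Num.conj k = k.
Proof. by move=> k0; apply/CrealP; exact: ger0_real. Qed.

Lemma conjNM (k y : C) : Num.conj k = k -> Num.conj (- (k * y)) = - (k * Num.conj y).
Proof. by move=> hk; rewrite rmorphN rmorphM; congr (- (_ * _)). Qed.

Lemma cmul_ge0 (x : C) : 0 <= Num.conj x * x.
Proof. by rewrite mulrC mul_conjC_ge0. Qed.

Lemma key4 (m : 'I_2 -> 'I_2 -> 'I_2 -> 'I_2 -> C) :
  (forall w, 0 <= Qw m w) ->
  (forall p q, m p q o0 o0 + m p q o1 o1 = (p == q)%:R) ->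
  forall x0 x1 y0 y1,
  Qw m (w4 x0 x1 y0 y1) <= (1 + (m o0 o0 o0 o0 + m o1 o1 o0 o0)) * Nw (w4 x0 x1 y0 y1).
Proof.
move=> Hpsd HTP x0 x1 y0 y1.
have D00 : m o0 o0 o1 o1 = 1 - m o0 o0 o0 o0.
  by have := HTP o0 o0; rewrite /= ?mulr1n ?mulr0n => <-; rewrite addrAC subrr add0r.
have D01 : m o0 o1 o1 o1 = 0 - m o0 o1 o0 o0.
  by have := HTP o0 o1; rewrite /= ?mulr1n ?mulr0n => <-; rewrite addrAC subrr add0r.
have D10 : m o1 o0 o1 o1 = 0 - m o1 o0 o0 o0.
  by have := HTP o1 o0; rewrite /= ?mulr1n ?mulr0n => <-; rewrite addrAC subrr add0r.
have D11 : m o1 o1 o1 o1 = 1 - m o1 o1 o0 o0.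
  by have := HTP o1 o1; rewrite /= ?mulr1n ?mulr0n => <-; rewrite addrAC subrr add0r.
have E1 : Qw m (w4 x0 x1 y0 y1) = (Num.conj x0 * m o0 o0 o0 o0 * x0 + Num.conj x0 * m o0 o1 o0 o0 * x1 + Num.conj x1 * m o1 o0 o0 o0 * x0 + Num.conj x1 * m o1 o1 o0 o0 * x1) + (Num.conj y0 * m o0 o0 o1 o1 * y0 + Num.conj y0 * m o0 o1 o1 o1 * y1 + Num.conj y1 * m o1 o0 o1 o1 * y0 + Num.conj y1 * m o1 o1 o1 o1 * y1) + (Num.conj x0 * m o0 o0 o0 o1 * y0 + Num.conj x0 * m o0 o1 o0 o1 * y1 + Num.conj x1 * m o1 o0 o0 o1 * y0 + Num.conj x1 * m o1 o1 o0 o1 * y1 + Num.conj y0 * m o0 o0 o1 o0 * x0 + Num.conj y0 * m o0 o1 o1 o0 * x1 + Num.conj y1 * m o1 o0 o1 o0 * x0 + Num.conj y1 * m o1 o1 o1 o0 * x1).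
  by rewrite /Qw /w4 !big2 /= ?(conjCK, rmorph0); ring.
have E7 : forall k, Num.conj k = k ->
    Qw m (w4 x0 x1 (-(k*y0)) (-(k*y1))) = (Num.conj x0 * m o0 o0 o0 o0 * x0 + Num.conj x0 * m o0 o1 o0 o0 * x1 + Num.conj x1 * m o1 o0 o0 o0 * x0 + Num.conj x1 * m o1 o1 o0 o0 * x1) + k^+2 * (Num.conj y0 * m o0 o0 o1 o1 * y0 + Num.conj y0 * m o0 o1 o1 o1 * y1 + Num.conj y1 * m o1 o0 o1 o1 * y0 + Num.conj y1 * m o1 o1 o1 o1 * y1) - k * (Num.conj x0 * m o0 o0 o0 o1 * y0 + Num.conj x0 * m o0 o1 o0 o1 * y1 + Num.conj x1 * m o1 o0 o0 o1 * y0 + Num.conj x1 * m o1 o1 o0 o1 * y1 + Num.conj y0 * m o0 o0 o1 o0 * x0 + Num.conj y0 * m o0 o1 o1 o0 * x1 + Num.conj y1 * m o1 o0 o1 o0 * x0 + Num.conj y1 * m o1 o1 o1 o0 * x1).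
  by move=> k hk; rewrite /Qw /w4 !big2 /= !(conjNM _ hk); ring.
have E3 : Qw m (w4 (Num.conj x1) (Num.conj (- x0)) 0 0) = (m o0 o0 o0 o0 + m o1 o1 o0 o0) * (Num.conj x0 * x0 + Num.conj x1 * x1) - (Num.conj x0 * m o0 o0 o0 o0 * x0 + Num.conj x0 * m o0 o1 o0 o0 * x1 + Num.conj x1 * m o1 o0 o0 o0 * x0 + Num.conj x1 * m o1 o1 o0 o0 * x1).
  by rewrite /Qw /w4 !big2 /= ?(conjCK, rmorph0); ring.
have E4 : Qw m (w4 y0 y1 0 0) = (Num.conj y0 * m o0 o0 o0 o0 * y0 + Num.conj y0 * m o0 o1 o0 o0 * y1 + Num.conj y1 * m o1 o0 o0 o0 * y0 + Num.conj y1 * m o1 o1 o0 o0 * y1).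
  by rewrite /Qw /w4 !big2 /= ?(conjCK, rmorph0); ring.
have E6 : Qw m (w4 0 0 y0 y1) = (Num.conj y0 * m o0 o0 o1 o1 * y0 + Num.conj y0 * m o0 o1 o1 o1 * y1 + Num.conj y1 * m o1 o0 o1 o1 * y0 + Num.conj y1 * m o1 o1 o1 o1 * y1).
  by rewrite /Qw /w4 !big2 /= ?(conjCK, rmorph0); ring.
have E0 : Qw m (w4 x0 x1 0 0) = (Num.conj x0 * m o0 o0 o0 o0 * x0 + Num.conj x0 * m o0 o1 o0 o0 * x1 + Num.conj x1 * m o1 o0 o0 o0 * x0 + Num.conj x1 * m o1 o1 o0 o0 * x1).
  by rewrite /Qw /w4 !big2 /= ?(conjCK, rmorph0); ring.
have E5 : (Num.conj y0 * m o0 o0 o1 o1 * y0 + Num.conj y0 * m o0 o1 o1 o1 * y1 + Num.conj y1 * m o1 o0 o1 o1 * y0 + Num.conj y1 * m o1 o1 o1 o1 * y1) = (Num.conj y0 * y0 + Num.conj y1 * y1) - (Num.conj y0 * m o0 o0 o0 o0 * y0 + Num.conj y0 * m o0 o1 o0 o0 * y1 + Num.conj y1 * m o1 o0 o0 o0 * y0 + Num.conj y1 * m o1 o1 o0 o0 * y1).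
  by rewrite D00 D01 D10 D11; ring.
have EN : Nw (w4 x0 x1 y0 y1) = (Num.conj x0 * x0 + Num.conj x1 * x1) + (Num.conj y0 * y0 + Num.conj y1 * y1).
  by rewrite /Nw /w4 !big2 /=.
have Nx0 : 0 <= (Num.conj x0 * x0 + Num.conj x1 * x1) by rewrite addr_ge0 ?cmul_ge0.
have Ny0 : 0 <= (Num.conj y0 * y0 + Num.conj y1 * y1) by rewrite addr_ge0 ?cmul_ge0.
have A0 : 0 <= m o0 o0 o0 o0.
  by have := Hpsd (w4 1 0 0 0); rewrite /Qw /w4 !big2 /= ?(conjCK, rmorph0) ?rmorph1; rewrite !(mul0r, mulr0, addr0, add0r, mul1r, mulr1).
have A1 : 0 <= m o1 o1 o0 o0.
  by have := Hpsd (w4 0 1 0 0); rewrite /Qw /w4 !big2 /= ?(conjCK, rmorph0) ?rmorph1; rewrite !(mul0r, mulr0, addr0, add0r, mul1r, mulr1).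
have h3 := Hpsd (w4 (Num.conj x1) (Num.conj (- x0)) 0 0); rewrite E3 in h3.
have h4 := Hpsd (w4 y0 y1 0 0); rewrite E4 in h4.
have h6 := Hpsd (w4 0 0 y0 y1); rewrite E6 in h6.
have h0 := Hpsd (w4 x0 x1 0 0); rewrite E0 in h0.
have hQ := Hpsd (w4 x0 x1 y0 y1); rewrite E1 in hQ.
rewrite E1 EN.
have r0 : 0 <= (m o0 o0 o0 o0 + m o1 o1 o0 o0) by rewrite addr_ge0.
move: E7 E5 h3 h4 h6 h0 hQ Nx0 Ny0 r0.
move: (Num.conj x0 * m o0 o0 o0 o0 * x0 + Num.conj x0 * m o0 o1 o0 o0 * x1 + Num.conj x1 * m o1 o0 o0 o0 * x0 + Num.conj x1 * m o1 o1 o0 o0 * x1) (Num.conj y0 * m o0 o0 o1 o1 * y0 + Num.conj y0 * m o0 o1 o1 o1 * y1 + Num.conj y1 * m o1 o0 o1 o1 * y0 + Num.conj y1 * m o1 o1 o1 o1 * y1) (Num.conj x0 * m o0 o0 o0 o1 * y0 + Num.conj x0 * m o0 o1 o0 o1 * y1 + Num.conj x1 * m o1 o0 o0 o1 * y0 + Num.conj x1 * m o1 o1 o0 o1 * y1 + Num.conj y0 * m o0 o0 o1 o0 * x0 + Num.conj y0 * m o0 o1 o1 o0 * x1 + Num.conj y1 * m o1 o0 o1 o0 * x0 + Num.conj y1 * m o1 o1 o1 o0 * x1) (Num.conj y0 * m o0 o0 o0 o0 * y0 + Num.conj y0 * m o0 o1 o0 o0 * y1 + Num.conj y1 * m o1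 o0 o0 o0 * y0 + Num.conj y1 * m o1 o1 o0 o0 * y1) (Num.conj x0 * x0 + Num.conj x1 * x1) (Num.conj y0 * y0 + Num.conj y1 * y1) (m o0 o0 o0 o0 + m o1 o1 o0 o0) => P B Cr Ay Nx Ny r.
move=> E7 E5 h3 h4 h6 h0 hQ Nx0 Ny0 r0.
have hk k : 0 < k -> 0 <= P + k^+2 * B - k * Cr.
  by move=> k0; rewrite -E7 ?Hpsd // conj_ge0_id // ltW.
move: r0; rewrite le0r => /orP[/eqP r00|rpos]; last first.
  rewrite -(ler_pM2l rpos) -subr_ge0.
  have -> : r * ((1 + r) * (Nx + Ny)) - r * (P + B + Cr) =
     (P + r^+2 * B - r * Cr) + (1 + r) * (r * Nx - P) + r * (1 + r) * Ay.
    by rewrite E5; ring.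
  have r0 := ltW rpos.
  have r1 : 0 <= 1 + r by rewrite addr_ge0.
  apply: addr_ge0; first apply: addr_ge0.
  - exact: hk.
  - exact: mulr_ge0.
  - by rewrite !mulr_ge0.
subst r.
have P0 : P <= 0 by move: h3; rewrite mul0r sub0r oppr_ge0.
have Crle : Cr <= 0.
  have Crr : Cr \is Num.real.
    have -> : Cr = (P + B + Cr) - P - B by ring.
    by rewrite !rpredB ?ger0_real.
  rewrite real_leNgt ?real0 //; apply/negP => Crpos.
  have B1 : 0 < B + 1 by rewrite ltr_wpDl.
  pose k := Cr / (B + 1).
  have k0 : 0 < k by rewrite divr_gt0.
  have h1 : Cr <= k * B.
    rewrite -(ler_pM2l k0); have := hk k k0.
    rewrite -subr_ge0 => h; rewrite -subr_ge0.
    have : 0 <= P + k ^+ 2 * B - k * Cr - P by rewrite subr_ge0 (le_trans P0).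
    by congr (0 <= _); ring.
  have h2 : k * B < Cr.
    rewrite /k mulrAC -mulrA -[X in _ < X]mulr1 ltr_pM2l //.
    by rewrite ltr_pdivrMr // mul1r ltrDl ltr01.
  by have := lt_le_trans h2 h1; rewrite ltxx.
rewrite addr0 mul1r -[X in _ <= X]addr0 lerD //.
rewrite lerD //; first exact: le_trans P0 Nx0.
by rewrite E5 lerBlDr lerDl.
Qed.

End Main.

Section P1.
Variable R : rcfType.
Local Notation C := (R[i]).

Lemma Qw_ext (m : 'I_2 -> 'I_2 -> 'I_2 -> 'I_2 -> C) w w' :
  (forall i p, w i p = w' i p) -> Qw m w = Qw m w'.
Proof.
move=> H; rewrite /Qw; apply: eq_bigr => i _; apply: eq_bigr => p _.
apply: eq_bigr => j _; apply: eq_bigr => q _; by rewrite !H.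
Qed.

Lemma Nw_ext (w w' : 'I_2 -> 'I_2 -> C) :
  (forall i p, w i p = w' i p) -> Nw w = Nw w'.
Proof. by move=> H; rewrite /Nw; apply: eq_bigr => i _; apply: eq_bigr => p _; rewrite !H. Qed.

Lemma key_gen (m : 'I_2 -> 'I_2 -> 'I_2 -> 'I_2 -> C) :
  (forall w, 0 <= Qw m w) ->
  (forall p q, m p q o0 o0 + m p q o1 o1 = (p == q)%:R) ->
  forall w, Qw m w <= (1 + (m o0 o0 o0 o0 + m o1 o1 o0 o0)) * Nw w.
Proof.
move=> H1 H2 w; have := key4 H1 H2 (w o0 o0) (w o0 o1) (w o1 o0) (w o1 o1).
have e i p : w4 (w o0 o0) (w o0 o1) (w o1 o0) (w o1 o1) i p = w i p.
  by case: (ord2P i) => ->; case: (ord2P p) => ->.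
by rewrite (Qw_ext _ e) (Nw_ext e).
Qed.

Definition norm2 n (v : 'cV[C]_n) := (adjmx v *m v) 0 0.
Definition mPhi (Phi : 'M[C]_2 -> 'M[C]_2) p q i j := Phi (delta_mx p q) i j.
Definition wv (v : 'cV[C]_(2*2)) i p := v (mxtens_index (i,p)) 0.

Lemma qfJ Phi v : qf (jamiolkowski Phi) v = 2^-1 * Qw (mPhi Phi) (wv v).
Proof.
rewrite qfE /Qw big_tens mulr_sumr; apply: eq_bigr => i _.
rewrite mulr_sumr; apply: eq_bigr => p _.
rewrite big_tens mulr_sumr; apply: eq_bigr => j _.
rewrite mulr_sumr; apply: eq_bigr => q _.
rewrite jamE /mPhi /wv; ring.
Qed.

Lemma norm2E v : norm2 v = Nw (wv v).
Proof.
rewrite /norm2 mxE big_tens; apply: eq_bigr => i _; apply: eq_bigr => p _.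
by rewrite !mxE.
Qed.

Lemma psdJ_Qw Phi : psd (jamiolkowski Phi) -> forall w, 0 <= Qw (mPhi Phi) w.
Proof.
move=> [_ hp] w; pose v : 'cV[C]_(2*2) := \col_r w (mxtens_unindex r).1 (mxtens_unindex r).2.
have := hp v; rewrite -/(qf _ v) qfJ.
have -> : Qw (mPhi Phi) (wv v) = Qw (mPhi Phi) w.
  by apply: Qw_ext => i p; rewrite /wv /v mxE mxtens_indexK.
by rewrite pmulr_rge0 // invr_gt0 ltr0n.
Qed.

End P1.

Section P1b.
Variable R : rcfType.
Local Notation C := (R[i]).

Definition omega : 'cV[C]_(2*2) :=
  \col_r ((mxtens_unindex r).1 == (mxtens_unindex r).2)%:R.

Lemma psd1 : psd (1%:M : 'M[C]_1).
Proof.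
split; first by apply/matrixP => i j; rewrite !ord1 !mxE eqxx rmorph1.
by move=> v; rewrite mulmx1 mxE big_ord1 !mxE cmul_ge0.
Qed.

Lemma psd_Omega : psd (omega *m 1%:M *m adjmx omega).
Proof. exact: psd_conj psd1. Qed.

Lemma jam_ampl (Phi : 'M[C]_2 -> 'M[C]_2) :
  jamiolkowski Phi = 2^-1 *: ampl Phi (omega *m 1%:M *m adjmx omega).
Proof.
apply/matrixP => r c.
case: (mxtens_indexP r) => i p; case: (mxtens_indexP c) => j q.
rewrite jamE [in RHS]mxE [in RHS]mxE !mxtens_indexK /=; congr (_ * _).
congr (Phi _ i j); apply/matrixP => i0 j0.
rewrite mulmx1 !mxE big_ord1 !mxE !mxtens_indexK /= rmorph_nat.
by rewrite -natrM mulnb.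
Qed.

Lemma cp_psdJ (Phi : 'M[C]_2 -> 'M[C]_2) :
  completely_positive Phi -> psd (jamiolkowski Phi).
Proof.
move=> cp; rewrite jam_ampl; apply: psd_scale; last exact: cp psd_Omega.
by rewrite invr_ge0 ler0n.
Qed.

Lemma tr_delta (p q : 'I_2) : \tr (delta_mx p q : 'M[C]_2) = (p == q)%:R.
Proof.
rewrite /mxtrace big2 !mxE.
by case: (ord2P p) => ->; case: (ord2P q) => -> /=; rewrite ?addr0 ?add0r.
Qed.

Lemma TP_m (Phi : 'M[C]_2 -> 'M[C]_2) : trace_preserving Phi ->
  forall p q, mPhi Phi p q o0 o0 + mPhi Phi p q o1 o1 = (p == q)%:R.
Proof. by move=> tp p q; rewrite /mPhi -tr_delta -(tp (delta_mx p q)) /mxtrace big2. Qed.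

End P1b.

Section P1c.
Variable R : rcfType.
Local Notation C := (R[i]).
Local Notation rc := (real_complex R).

Lemma trJ (Phi : 'M[C]_2 -> 'M[C]_2) : trace_preserving Phi ->
  \tr (jamiolkowski Phi) = 1.
Proof.
move=> tp; have h0 := TP_m tp o0 o0; have h1 := TP_m tp o1 o1.
rewrite /= mulr1n /mPhi in h0 h1.
have e0 : Phi (delta_mx o0 o0) o1 o1 = 1 - Phi (delta_mx o0 o0) o0 o0.
  by rewrite -h0 addrAC subrr add0r.
have e1 : Phi (delta_mx o1 o1) o1 o1 = 1 - Phi (delta_mx o1 o1) o0 o0.
  by rewrite -h1 addrAC subrr add0r.
rewrite /mxtrace big_tens !big2 /= !jamE e0 e1.
by field.
Qed.

Lemma eig_bound (Phi : 'M[C]_2 -> 'M[C]_2) a b :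
  completely_positive Phi -> trace_preserving Phi ->
  classical_action Phi = Tab a b ->
  forall z, root (char_poly (jamiolkowski Phi)) z ->
  0 <= z /\ z <= rc ((1 + a + (1 - b)) / 2).
Proof.
move=> cp tp hT z; rewrite -eigenvalue_root_char => /eigenvalueP [u hu u0].
have psdJ := cp_psdJ cp.
pose v := adjmx u.
have hq : qf (jamiolkowski Phi) v = z * norm2 v.
  by rewrite /qf /norm2 /v adjmxK hu -scalemxAl mxE.
have n0 : 0 < norm2 v.
  have -> : norm2 v = \sum_j u 0 j * Num.conj (u 0 j).
    by rewrite /norm2 /v adjmxK mxE; apply: eq_bigr => j _; rewrite !mxE.
  rewrite lt_def sumr_ge0 ?andbT; last by move=> j _; rewrite mul_conjC_ge0.
  apply/negP => /eqP h0; apply/negP: u0; rewrite negbK; apply/eqP/rowP => j.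
  have := @psumr_eq0P _ _ _ _ (fun j _ => mul_conjC_ge0 (u 0 j)) h0 j isT.
  by move/eqP; rewrite mul_conjC_eq0 mxE => /eqP.
have t00 := congr1 (fun M : 'M[C]_2 => M o0 o0) hT; have t01 := congr1 (fun M : 'M[C]_2 => M o0 o1) hT.
rewrite /classical_action /Tab !mxE /= in t00 t01.
have kb := key_gen (psdJ_Qw psdJ) (TP_m tp) (wv v).
rewrite /mPhi t00 t01 in kb.
split.
  by have := proj2 psdJ v; rewrite -/(qf _ v) hq pmulr_lge0.
rewrite -(ler_pM2r n0) -hq qfJ norm2E.
have -> : rc ((1 + a + (1 - b)) / 2) * Nw (wv v) =
    2^-1 * ((1 + (rc a + rc (1 - b))) * Nw (wv v)).
  rewrite !(rmorphM, rmorphD, rmorphB, rmorph1, fmorphV, rmorph_nat) /=; ring.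
by rewrite ler_pM2l // invr_gt0 ltr0n.
Qed.

End P1c.

Section P1d.
Variable R : rcfType.
Local Notation C := (R[i]).
Local Notation rc := (real_complex R).

Lemma part1 (a b : R) (Phi : 'M[C]_2 -> 'M[C]_2) :
  0 <= a -> a <= b -> b <= 1 ->
  completely_positive Phi -> trace_preserving Phi ->
  classical_action Phi = Tab a b ->
  exists s : seq R, spectrum (jamiolkowski Phi) s /\ majorizes (mu_vec a b) s.
Proof.
move=> a0 ab b1 cp tp hT.
set J := jamiolkowski Phi.
have [rs hrs] := closed_field_poly_normal (char_poly J).
rewrite (monicP (char_poly_monic J)) scale1r in hrs.
have hroot z : z \in rs -> 0 <= z /\ z <= rc ((1 + a + (1 - b)) / 2).
  by move=> zin; apply: (eig_bound cp tp hT); rewrite -/J hrs root_prod_XsubC.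
have hreal z : z \in rs -> rc (complex.Re z) = z.
  by move=> zin; apply: RRe_real; apply: ger0_real; exact: (hroot z zin).1.
set s := map (@complex.Re R) rs.
have hsize : size rs = 4%N.
  by have := size_char_poly J; rewrite hrs size_prod_XsubC => -[].
have hprod : char_poly J = \prod_(x <- s) ('X - (rc x)%:P).
  by rewrite hrs big_map; apply: eq_big_seq => z zin; rewrite hreal.
have hsum : \sum_(z <- rs) z = 1.
  have h1 := char_poly_trace J isT.
  have h2 := @coefPn_prod_XsubC _ rs.
  rewrite hsize -hrs in h2; have {}h2 := h2 isT.
  have e : - \tr J = - \sum_(z <- rs) z := etrans (esym h1) h2.
  by move/eqP: e; rewrite eqr_opp (trJ tp) => /eqP.
have hsumR : \sum_(x <- s) x = 1.
  apply: (@complexI R); rewrite rmorph_sum big_map rmorph1 -hsum.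
  by apply: eq_big_seq => z zin; exact: hreal.
exists s; split; first by split; rewrite ?size_map ?hsize.
rewrite /majorizes; split; first by rewrite size_map hsize.
have hmu : sort (fun u v : R => v <= u) (mu_vec a b) = mu_vec a b.
  apply: sorted_sort; first by move=> y x z hyx hzy; exact: le_trans hzy hyx.
  have h1 : (b - a) / 2 <= (1 + a + (1 - b)) / 2 by lra.
  have h2 : 0 <= (b - a) / 2 by lra.
  by rewrite /= h1 h2 lexx.
move=> k hk; rewrite hmu.
have hmem x : x \in sort (fun u v : R => v <= u) s ->
    0 <= x /\ x <= (1 + a + (1 - b)) / 2.
  rewrite mem_sort => /mapP [z zin ->]; have [h0 h1] := hroot z zin.
  move: h0 h1; rewrite -(hreal z zin) ler0c lecR => h0 h1; split => //.
have hsumt : \sum_(x <- sort (fun u v : R => v <= u) s) x = 1.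
  by rewrite (perm_big s) // perm_sort perm_refl.
have hsz : size (sort (fun u v : R => v <= u) s) = 4%N by rewrite size_sort size_map hsize.
move: hmem hsumt hsz; case: (sort _ s) => [|t0 [|t1 [|t2 [|t3 [|? ?]]]]] //= hmem hsumt _.
have [h00 h01] := hmem t0 (mem_head _ _).
have [h10 h11] : 0 <= t1 /\ t1 <= (1 + a + (1 - b)) / 2 by apply: hmem; rewrite !inE eqxx ?orbT.
have [h20 h21] : 0 <= t2 /\ t2 <= (1 + a + (1 - b)) / 2 by apply: hmem; rewrite !inE eqxx ?orbT.
have [h30 h31] : 0 <= t3 /\ t3 <= (1 + a + (1 - b)) / 2 by apply: hmem; rewrite !inE eqxx ?orbT.
rewrite !big_cons big_nil addr0 in hsumt.
move: hk; case: k => [|[|[|[|[|k]]]]] // _; rewrite ?big_ord0 ?big_ord_recr ?big_ord0 /=; lra.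
Qed.

End P1d.

Lemma char_poly_sim (F : fieldType) n (V D : 'M[F]_n) :
  V \in unitmx -> char_poly (V *m D *m invmx V) = char_poly D.
Proof.
move=> Vu; rewrite /char_poly /char_poly_mx.
have -> : 'X%:M - map_mx polyC (V *m D *m invmx V) =
    map_mx polyC V *m ('X%:M - map_mx polyC D) *m map_mx polyC (invmx V).
  rewrite mulmxBr mulmxBl !map_mxM; congr (_ - _).
  by rewrite mul_mx_scalar -scalemxAl -map_mxM mulmxV // map_mx1 scalemx1.
by rewrite !det_mulmx mulrAC -det_mulmx -map_mxM mulmxV // map_mx1 det1 mul1r.
Qed.

Lemma mulmx3E (T : comNzRingType) m n p q (A : 'M[T]_(m,n)) (X : 'M[T]_(n,p)) (B : 'M[T]_(p,q)) r c :
  (A *m X *m B) r c = \sum_s \sum_t A r s * X s t * B t c.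
Proof.
rewrite mxE exchange_big; apply: eq_bigr => t _; rewrite mxE big_distrl.
by apply: eq_bigr => s _.
Qed.

Section Kraus.
Variable R : rcfType.
Local Notation C := (R[i]).

Definition kraus2 (K1 K2 : 'M[C]_2) (X : 'M[C]_2) :=
  K1 *m X *m adjmx K1 + K2 *m X *m adjmx K2.

Lemma kraus2_linear K1 K2 : linear (kraus2 K1 K2).
Proof.
move=> a U V; rewrite /kraus2 !mulmxDr !mulmxDl -!scalemxAr -!scalemxAl scalerDr.
by rewrite addrACA.
Qed.

Definition kraus2L K1 K2 : {linear 'M[C]_2 -> 'M[C]_2} :=
  HB.pack (kraus2 K1 K2) (GRing.isLinear.Build _ _ _ _ _ (kraus2_linear K1 K2)).

Lemma sum_delta k (p : 'I_k) (F : 'I_k -> C) : \sum_(p' < k) F p' * (p == p')%:R = F p.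
Proof.
rewrite (bigD1 p) //= eqxx mulr1 big1 ?addr0 // => p' hp'.
by rewrite eq_sym (negbTE hp') mulr0.
Qed.

Lemma ampl_kraus1 k (K : 'M[C]_2) (X : 'M[C]_(2 * k)) :
  ampl (fun Y => K *m Y *m adjmx K) X = (K *t 1%:M) *m X *m adjmx (K *t 1%:M).
Proof.
apply/matrixP => r c.
case: (mxtens_indexP r) => i p; case: (mxtens_indexP c) => j q.
rewrite mxE !mxtens_indexK /= !mulmx3E [in RHS]big_tens; apply: eq_bigr => m _.
rewrite [in RHS](bigD1 p) //= [X in _ + X]big1 ?addr0; last first.
  move=> p' hp'; apply: big1 => t _.
  by rewrite !mxE !mxtens_indexK /= eq_sym (negbTE hp') mulr0 !mul0r.
rewrite [in RHS]big_tens; apply: eq_bigr => l _.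
rewrite [in RHS](bigD1 q) //= [X in _ + X]big1 ?addr0; last first.
  move=> q' hq'; rewrite !mxE !mxtens_indexK /= eq_sym (negbTE hq') mulr0 rmorph0.
  by rewrite mulr0.
by rewrite !mxE !mxtens_indexK /= !eqxx !mulr1.
Qed.

Lemma ampl_add (f g : 'M[C]_2 -> 'M[C]_2) k (X : 'M[C]_(2 * k)) :
  ampl (fun Y => f Y + g Y) X = ampl f X + ampl g X.
Proof. by apply/matrixP => r c; rewrite !mxE. Qed.

Lemma kraus2_cp K1 K2 : completely_positive (kraus2 K1 K2).
Proof.
move=> k X hX; rewrite /kraus2 (ampl_add (fun Y => K1 *m Y *m adjmx K1) (fun Y => K2 *m Y *m adjmx K2)).
by rewrite !ampl_kraus1; apply: psd_add; apply: psd_conj.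
Qed.

End Kraus.

Definition mx2 (T : Type) (x00 x01 x10 x11 : T) : 'M[T]_2 :=
  \matrix_(i, j) if i == o0 then (if j == o0 then x00 else x01)
                 else (if j == o0 then x10 else x11).

Section Concrete.
Variable R : rcfType.
Local Notation C := (R[i]).
Local Notation rc := (real_complex R).

Lemma conj_rc (x : R) : Num.conj (rc x) = rc x.
Proof. by apply/CrealP/complex_realP; exists x. Qed.

Lemma adjmx_rc m n (A : 'M[R]_(m, n)) : adjmx (map_mx rc A) = map_mx rc A^T.
Proof. by apply/matrixP => i j; rewrite !mxE conj_rc. Qed.

Lemma kraus_delta (K : 'M[C]_2) p q i j :
  (K *m delta_mx p q *m adjmx K) i j = K i p * Num.conj (K j q).
Proof.
rewrite mulmx3E !big2 /= !mxE.
by case: (ord2P p) => ->; case: (ord2P q) => -> /=; rewrite ?(mulr0, mul0r, mulr1, addr0, add0r).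
Qed.

Definition K1R (u1 u2 s : R) : 'M[R]_2 := mx2 (s * u1) (s * u2) u2 (- u1).
Definition K2R (u1 u2 t : R) : 'M[R]_2 := mx2 0 0 (t * u1) (t * u2).

Lemma sumKK u1 u2 s t : u1 ^+ 2 + u2 ^+ 2 = 1 -> s ^+ 2 + t ^+ 2 = 1 ->
  (K1R u1 u2 s)^T *m K1R u1 u2 s + (K2R u1 u2 t)^T *m K2R u1 u2 t = 1%:M.
Proof.
move=> Hu Hst; apply/matrixP => i j; rewrite !mxE !big2 /= !mxE.
case: (ord2P i) => ->; case: (ord2P j) => -> /=; apply/eqP; rewrite -subr_eq0; apply/eqP.
- have -> : s * u1 * (s * u1) + u2 * u2 + (0 * 0 + t * u1 * (t * u1)) - 1 =
     u1 ^+ 2 * (s ^+ 2 + t ^+ 2 - 1) + (u1 ^+ 2 + u2 ^+ 2 - 1) by ring.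
  by rewrite Hu Hst subrr mulr0 addr0.
- have -> : s * u1 * (s * u2) + u2 * - u1 + (0 * 0 + t * u1 * (t * u2)) - 0 =
     u1 * u2 * (s ^+ 2 + t ^+ 2 - 1) by ring.
  by rewrite Hst subrr mulr0.
- have -> : s * u2 * (s * u1) + - u1 * u2 + (0 * 0 + t * u2 * (t * u1)) - 0 =
     u1 * u2 * (s ^+ 2 + t ^+ 2 - 1) by ring.
  by rewrite Hst subrr mulr0.
- have -> : s * u2 * (s * u2) + - u1 * - u1 + (0 * 0 + t * u2 * (t * u2)) - 1 =
     u2 ^+ 2 * (s ^+ 2 + t ^+ 2 - 1) + (u1 ^+ 2 + u2 ^+ 2 - 1) by ring.
  by rewrite Hu Hst subrr mulr0 addr0.
Qed.


Definition PhiK u1 u2 s t := kraus2 (map_mx rc (K1R u1 u2 s)) (map_mx rc (K2R u1 u2 t)).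

Lemma PhiK_tp u1 u2 s t : u1 ^+ 2 + u2 ^+ 2 = 1 -> s ^+ 2 + t ^+ 2 = 1 ->
  trace_preserving (PhiK u1 u2 s t).
Proof.
move=> Hu Hst X; rewrite /PhiK /kraus2 mxtraceD.
rewrite [\tr (map_mx rc (K1R _ _ _) *m X *m _)]mxtrace_mulC.
rewrite [\tr (map_mx rc (K2R _ _ _) *m X *m _)]mxtrace_mulC.
rewrite !mulmxA -mxtraceD -mulmxDl !adjmx_rc -!map_mxM -map_mxD sumKK //.
by rewrite map_mx1 mul1mx.
Qed.

Lemma PhiK_ca (a b u1 u2 s t : R) : u1 ^+ 2 + u2 ^+ 2 = 1 -> s ^+ 2 + t ^+ 2 = 1 ->
  (s * u1) ^+ 2 = a -> (s * u2) ^+ 2 = 1 - b ->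
  classical_action (PhiK u1 u2 s t) = Tab a b.
Proof.
move=> Hu Hst Ha Hb; apply/matrixP => i j.
rewrite /classical_action /Tab /PhiK /kraus2 [LHS]mxE [LHS]mxE !kraus_delta [RHS]mxE !mxE !conj_rc.
rewrite -!rmorphM -rmorphD; congr (rc _).
case: (ord2P i) => ->; case: (ord2P j) => -> /=.
- by rewrite -Ha; ring.
- by rewrite -Hb; ring.
- have h : u2 * u2 + t * u1 * (t * u1) = (1 - a) + ((u1 ^+ 2 + u2 ^+ 2 - 1)
     + u1 ^+ 2 * (s ^+ 2 + t ^+ 2 - 1) + (a - (s * u1) ^+ 2)) by ring.
  by rewrite h Hu Hst Ha !subrr mulr0 !addr0.
- have h : - u1 * - u1 + t * u2 * (t * u2) = b + ((u1 ^+ 2 + u2 ^+ 2 - 1)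
     + u2 ^+ 2 * (s ^+ 2 + t ^+ 2 - 1) + ((1 - b) - (s * u2) ^+ 2)) by ring.
  by rewrite h Hu Hst Hb !subrr mulr0 !addr0.
Qed.

End Concrete.

Section Spec.
Variable R : rcfType.
Local Notation C := (R[i]).
Local Notation rc := (real_complex R).
Variables (u1 u2 s t : R).

Definition JR : 'M[R]_(2 * 2) := \matrix_(r, c)
  (2^-1 * (K1R u1 u2 s (mxtens_unindex r).1 (mxtens_unindex r).2 *
           K1R u1 u2 s (mxtens_unindex c).1 (mxtens_unindex c).2 +
           K2R u1 u2 t (mxtens_unindex r).1 (mxtens_unindex r).2 *
           K2R u1 u2 t (mxtens_unindex c).1 (mxtens_unindex c).2)).

Lemma jamK : jamiolkowski (PhiK u1 u2 s t) = map_mx rc JR.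
Proof.
apply/matrixP => r c.
case: (mxtens_indexP r) => i p; case: (mxtens_indexP c) => j q.
rewrite jamE /PhiK /kraus2 [in LHS]mxE !kraus_delta !mxE !mxtens_indexK !conj_rc.
by rewrite !(rmorphM, rmorphD, fmorphV, rmorph_nat).
Qed.

Definition vf (j q i p : 'I_2) : R :=
 if j == o0 then
   (if q == o0 then K1R u1 u2 s i p
    else (if i == o0 then 0 else (if p == o0 then u1 else u2)))
 else
   (if q == o0 then (if i == o0 then (if p == o0 then u2 else - u1) else 0)
    else (if i == o0 then (if p == o0 then u1 else u2)
          else (if p == o0 then - (s * u2) else s * u1))).

Definition VV : 'M[R]_(2 * 2) := \matrix_(r, c)
  vf (mxtens_unindex c).1 (mxtens_unindex c).2 (mxtens_unindex r).1 (mxtens_unindex r).2.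

Definition NN := u1 ^+ 2 + u2 ^+ 2.

Definition dd : 'rV[R]_(2 * 2) := \row_c
  (if (mxtens_unindex c).1 == o0 then
     (if (mxtens_unindex c).2 == o0 then (1 + s ^+ 2) * NN / 2 else t ^+ 2 * NN / 2)
   else 0).

Lemma JRV : JR *m VV = VV *m diag_mx dd.
Proof.
apply/matrixP => r c.
case: (mxtens_indexP r) => i p; case: (mxtens_indexP c) => j q.
rewrite !mxE !big_tens !big2 /= !mxE !mxtens_indexK /vf /K1R /K2R /mx2 /NN.
case: (ord2P i) => ->; case: (ord2P p) => ->; case: (ord2P j) => ->; case: (ord2P q) => -> /=.
all: rewrite ?mxE /=.
all: ring.
Qed.


Definition gg : 'rV[R]_(2 * 2) := \row_c
  (if (mxtens_unindex c).1 == o0 then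
     (if (mxtens_unindex c).2 == o0 then (1 + s ^+ 2) * NN else NN)
   else (if (mxtens_unindex c).2 == o0 then NN else (1 + s ^+ 2) * NN)).

Lemma VtV : VV^T *m VV = diag_mx gg.
Proof.
apply/matrixP => r c.
case: (mxtens_indexP r) => i p; case: (mxtens_indexP c) => j q.
rewrite !mxE !big_tens !big2 /= !mxE !mxtens_indexK /vf /K1R /K2R /mx2 /NN.
case: (ord2P i) => ->; case: (ord2P p) => ->; case: (ord2P j) => ->; case: (ord2P q) => -> /=.
all: rewrite ?mxE /=.
all: ring.
Qed.

Lemma VV_unit : NN = 1 -> VV \in unitmx.
Proof.
move=> hN; have : (VV^T *m VV) \in unitmx.
  have h1 : 1 + s ^+ 2 != 0 by rewrite paddr_eq0 ?sqr_ge0 // oner_eq0.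
  rewrite VtV unitmxE det_diag unitfE big_tens !big2 /= !mxE !mxtens_indexK /= hN !mulr1.
  by rewrite !mulf_neq0 ?oner_eq0.
by rewrite unitmx_mul => /andP[_ ->].
Qed.

Lemma charJR : NN = 1 ->
  char_poly JR = \prod_(x <- [:: (1 + s ^+ 2) / 2; t ^+ 2 / 2; 0; 0]) ('X - x%:P).
Proof.
move=> hN; have Vu := VV_unit hN.
rewrite -[JR](mulmxK Vu) JRV char_poly_sim // char_poly_trig; last first.
  exact/is_diag_mx_is_trig/diag_mx_is_diag.
rewrite big_tens !big2 /= !mxE !mxtens_indexK /= hN ?mulr1n !mulr1 !big_cons big_nil mulr1.
by rewrite !mulrA.
Qed.

End Spec.

Unset Implicit Arguments.

Lemma params (R : rcfType) (a b : R) : 0 <= a -> a <= b -> b <= 1 ->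
  exists u1 u2 s t : R, [/\ u1 ^+ 2 + u2 ^+ 2 = 1, s ^+ 2 + t ^+ 2 = 1,
     (s * u1) ^+ 2 = a, (s * u2) ^+ 2 = 1 - b & s ^+ 2 = a + (1 - b) /\ t ^+ 2 = b - a].
Proof.
move=> a0 ab b1.
have r0 : 0 <= a + (1 - b) by lra.
have ba0 : 0 <= b - a by lra.
pose s := Num.sqrt (a + (1 - b)); pose t := Num.sqrt (b - a).
have hs : s ^+ 2 = a + (1 - b) by rewrite sqr_sqrtr.
have ht : t ^+ 2 = b - a by rewrite sqr_sqrtr.
have hst : s ^+ 2 + t ^+ 2 = 1 by rewrite hs ht; ring.
have [s0|s0] := eqVneq s 0.
  have hr : a + (1 - b) = 0 by rewrite -hs s0 expr0n.
  have ha : a = 0 by lra.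
  have hb : 1 - b = 0 by lra.
  exists 0, 1, s, t; split => //.
  - by rewrite expr0n expr1n add0r.
  - by rewrite s0 mul0r expr0n ha.
  - by rewrite s0 mul0r expr0n hb.
have a0' : 0 <= 1 - b by lra.
exists (Num.sqrt a / s), (Num.sqrt (1 - b) / s), s, t; split => //.
- rewrite !expr_div_n !sqr_sqrtr // -mulrDl -hs mulfV //.
  by rewrite expf_neq0.
- by rewrite mulrC divfK // sqr_sqrtr.
- by rewrite mulrC divfK // sqr_sqrtr.
Qed.

Theorem mainTheorem5 (R : rcfType) (a b : R) :
  0 <= a -> a <= b -> b <= 1 ->
  (forall Phi : {linear 'M[R[i]]_2 -> 'M[R[i]]_2},
      qubit_channel Phi -> classical_action Phi = Tab a b ->
      exists s : seq R, spectrum (jamiolkowski Phi) s /\ majorizes (mu_vec a b) s)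
  /\
  (exists PhiC : {linear 'M[R[i]]_2 -> 'M[R[i]]_2},
      qubit_channel PhiC /\ classical_action PhiC = Tab a b /\
      spectrum (jamiolkowski PhiC) (mu_vec a b)).
Proof.
move=> a0 ab b1; split.
  by move=> Phi [cp tp] hT; exact: part1.
have [u1 [u2 [s [t [Hu Hst Ha Hb [hs ht]]]]]] := @params R a b a0 ab b1.
exists (kraus2L (map_mx (real_complex R) (K1R u1 u2 s)) (map_mx (real_complex R) (K2R u1 u2 t))).
split; first split.
- exact: kraus2_cp.
- exact: PhiK_tp.
split; first exact: PhiK_ca.
split; first by [].
rewrite (jamK u1 u2 s t) -map_char_poly charJR //.
have -> : [:: (1 + s ^+ 2) / 2; t ^+ 2 / 2; 0; 0] = mu_vec a b.
  by rewrite /mu_vec hs ht addrA.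
rewrite rmorph_prod; apply: eq_bigr => x _; exact: map_polyXsubC.
Qed.
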